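(* Let an FTTC mechanism satisfy stepwise equal-endowment equal treatment. Then for every FEE problem, the output assignment $p$ satisfies equal-endowment no envy: for all $i,j\in I$ with $\omega_i=\omega_j$, $p_i\succsim^{sd}_i p_j$ and $p_j\succsim^{sd}_j p_i$.
   Context: Fractional endowment exchange (FEE) problem: a tuple $(I,O,\succsim_I,\omega)$ where $I$ is a finite set of agents, $O$ a finite set of objects, each agent $i$ has a complete and transitive (possibly non-strict) preference relation $\succsim_i$ over $O$ with asymmetric part $\succ_i$ and symmetric part $\sim_i$, and $\omega=(\omega_{i,o})_{i\in I,o\in O}$ is an endowment matrix with $\omega_{i,o}\in[0,1]$, $\sum_{o\in O}\omega_{i,o}\le 1$ for each $i$, and $q_o=\sum_{i\in I}\omega_{i,o}$ an integer for each $o$. An assignment is a nonnegative matrix $p=(p_{i,o})$ with $\sum_i p_{i,o}\le q_o$ for all $o$ and $\sum_o p_{i,o}\le 1$ for all $i$; $p_i=(p_{i,o})_{o\in O}$ is $i$'s lottery; $\omega_i=(\omega_{i,o})_{o\in O}$. For vectors $l,l'\in\mathbb R^O_+$, $l\succsim^{sd}_i l'$ means $\sum_{o'\succsim_i o}l_{o'}\ge\sum_{o'\succsim_i o}l'_{o'}$ for all $o\in O$. FTTC (Fractional Top Trading Cycle) on the full preference domain. Initialize $\omega(0)=\omega$, $p(0)=0$, $O(0)=O$. At step $d\ge1$ (with $O(d-1)\ne\emptyset$): (i) Labeling. Put $T_0=O(d-1)$. For $k=1,2,\dots$: let $L_k$ be the set of agents $i\notin L_1\cup\dots\cup L_{k-1}$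 for which there exist $o\in T_{k-1}$ and $o'\in O\setminus(T_0\cup\dots\cup T_{k-1})$ with $p_{i,o'}(d-1)>0$ and $o\sim_i o'$; for $i\in L_k$ let $\tilde O_i(d-1)$ be the set of all such $o'$ for this $i$, and let $T_k=\bigcup_{i\in L_k}\tilde O_i(d-1)$. Stop at the first $k$ with $L_k=\emptyset$. Set $L(d-1)=\bigcup_k L_k$, $\tilde O(d-1)=\bigcup_{k\ge1}T_k$, $\overline{O}(d-1)=O(d-1)\cup\tilde O(d-1)$, and $\tilde O_i(d-1)=\emptyset$ for $i\notin L(d-1)$. (ii) Pointing. The active agents are $I(d-1)=L(d-1)\cup\{i\in I:\sum_o\omega_{i,o}(d-1)>0\}$. For $i\in I(d-1)$ let $B_i$ be the set of $\succsim_i$-maximal elements of $\overline{O}(d-1)$, let $k_i$ be the least $k\ge0$ with $B_i\cap T_k\ne\emptyset$, and let $A_i(d)=B_i\cap T_{k_i}$. (iii) Trading. The mechanism chooses (possibly depending on the history): a ratio matrix $\lambda(d)=(\lambda_{i,o}(d))_{i\in I(d-1),o\in\overline{O}(d-1)}$, nonnegative, with $\sum_{i\in I(d-1)}\lambda_{i,o}(d)=1$ for each $o\in\overline O(d-1)$, $\lambda_{i,o}(d)>0$ only if $\omega_{i,o}(d-1)>0$ (for $o\in O(d-1)$) and only if $o\in\tilde O_i(d-1)$ (for $o\in\tilde O(d-1)$); a quota matrix $\beta(d)$ on $I(d-1)\times O(d-1)$ with $0\le\beta_{i,o}(d)\le\omega_{i,o}(d-1)$; a division matrix $\gamma(d)$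 on $I(d-1)\times\overline O(d-1)$, nonnegative, with $\sum_o\gamma_{i,o}(d)=1$ and $\gamma_{i,o}(d)>0$ only if $o\in A_i(d)$. Let $x^*(d)=(x^*_a(d))_{a\in I(d-1)\cup\overline O(d-1)}$ be the maximum (componentwise largest) nonnegative solution of $x_o=\sum_{i\in I(d-1)}\gamma_{i,o}(d)x_i$ for all $o\in\overline O(d-1)$ and $x_i=\sum_{o\in\overline O(d-1)}\lambda_{i,o}(d)x_o$ for all $i\in I(d-1)$, subject to $\lambda_{i,o}(d)x_o\le\beta_{i,o}(d)$ for $o\in O(d-1)$ and $\lambda_{i,o}(d)x_o\le p_{i,o}(d-1)$ for $o\in\tilde O(d-1)$. For $i\in I(d-1)$: $\omega_{i,o}(d)=\omega_{i,o}(d-1)-\lambda_{i,o}(d)x^*_o(d)$ if $o\in O(d-1)$ and $0$ otherwise; $p_{i,o}(d)=p_{i,o}(d-1)-\mathbf 1[o\in\tilde O_i(d-1)]\lambda_{i,o}(d)x^*_o(d)+\gamma_{i,o}(d)x^*_i(d)$ (with $\gamma_{i,o}(d)=0$ for $o\notin\overline O(d-1)$). For $i\notin I(d-1)$, $\omega_i(d)=\omega_i(d-1)$, $p_i(d)=p_i(d-1)$. Let $O(d)=\{o\in O(d-1):\sum_i\omega_{i,o}(d)>0\}$. If $O(d)=\emptyset$ stop and output $p(d)$; otherwise go to step $d+1$. (Standing assumption: the maximum solution exists at each step and the procedure ends after finitely many steps.) An FTTC mechanism is specified by a rule choosing $\lambda(d),\beta(d),\gamma(d)$ at every step. Stepwise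 equal-endowment equal treatment (stepwise EEET): at every step $d$, for all $i,j\in I(d-1)$, if $\omega_i(d-1)=\omega_j(d-1)$ then $\lambda_{i,o}(d)=\lambda_{j,o}(d)$ for all $o\in O(d-1)$. *)

(* Defs.v *)
From HB Require Import structures.
From mathcomp Require Import all_boot all_order all_algebra.
Set Implicit Arguments. Unset Strict Implicit. Unset Printing Implicit Defensive.
Import Order.TTheory GRing.Theory Num.Theory.
Local Open Scope ring_scope.

Section FTTC.
Variables (R : realFieldType) (I O : finType) (pref : I -> rel O).
(* pref i a b  means  a ≿_i b *)

Definition indiff (i : I) (a b : O) : bool := pref i a b && pref i b a.

Definition is_FEE (om : I -> O -> R) : Prop :=
  (forall i a b, pref i a b || pref i b a) /\
  (forall i a b c, pref i a b -> pref i b c -> pref i a c) /\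
  (forall i o, 0 <= om i o <= 1) /\
  (forall i, \sum_(o : O) om i o <= 1) /\
  (forall o, exists q : nat, \sum_(i : I) om i o = q%:R).

Definition sd_ge (i : I) (l l' : O -> R) : Prop :=
  forall o, \sum_(o' : O | pref i o' o) l' o' <= \sum_(o' : O | pref i o' o) l o'.

Definition EENE (om p : I -> O -> R) : Prop :=
  forall i j, (forall o, om i o = om j o) ->
    sd_ge i (p i) (p j) /\ sd_ge j (p j) (p i).

(* ---------- (i) Labeling at a step, given p = p(d-1), Oc = O(d-1) ---------- *)
Section Labeling.
Variables (p : I -> O -> R) (Oc : {set O}).

(* candidate set of i at the next level, given T_{k-1} and T_0 ∪ ... ∪ T_{k-1} *)
Definition tildeO_at (Tprev Tcum : {set O}) (i : I) : {set O} :=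
  [set o' | (o' \notin Tcum) && (0 < p i o') && [exists o in Tprev, indiff i o o']].

(* lab k = (L_k, T_k, L_1 ∪ ... ∪ L_k, T_0 ∪ ... ∪ T_k) *)
Fixpoint lab (k : nat) : {set I} * {set O} * {set I} * {set O} :=
  match k with
  | 0 => (set0, Oc, set0, Oc)
  | k'.+1 =>
      let: (_, Tprev, Lcum, Tcum) := lab k' in
      let Lnew := [set i | (i \notin Lcum) && (tildeO_at Tprev Tcum i != set0)] in
      let Tnew := \bigcup_(i in Lnew) tildeO_at Tprev Tcum i in
      (Lnew, Tnew, Lcum :|: Lnew, Tcum :|: Tnew)
  end.

Definition Lk k : {set I} := (lab k).1.1.1.
Definition Tk k : {set O} := (lab k).1.1.2.
Definition Lcum k : {set I} := (lab k).1.2.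
Definition Tcum k : {set O} := (lab k).2.

(* At most #|I| levels are nonempty; after the first empty level all are empty. *)
Definition K : nat := #|I|.+2.

Definition Lset : {set I} := \bigcup_(k < K) Lk k.+1.
Definition tildeO : {set O} := \bigcup_(k < K) Tk k.+1.
(* tilde O_i(d-1): the o' found for i at the level where i was labeled *)
Definition tildeOi (i : I) : {set O} :=
  \bigcup_(k < K | i \in Lk k.+1) tildeO_at (Tk k) (Tcum k) i.
Definition Obar : {set O} := Oc :|: tildeO.

Definition Iact (om : I -> O -> R) : {set I} :=
  Lset :|: [set i | 0 < \sum_(o : O) om i o].

Definition Bset (i : I) : {set O} := [set o in Obar | [forall o' in Obar, pref i o o']].

Definition Aset (i : I) : {set O} :=
  [set o in Bset i | [exists k : 'I_K.+1,
      (o \in Tk k) && [forall k' : 'I_K.+1, (k' < k)%N ==> [disjoint Bset i & Tk k']]]].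

Variables (om : I -> O -> R) (lam beta gam : I -> O -> R).

Definition valid_choices : Prop :=
  (forall i o, i \in Iact om -> o \in Obar -> 0 <= lam i o) /\
  (forall o, o \in Obar -> \sum_(i in Iact om) lam i o = 1) /\
  (forall i o, i \in Iact om -> o \in Oc -> 0 < lam i o -> 0 < om i o) /\
  (forall i o, i \in Iact om -> o \in tildeO -> 0 < lam i o -> o \in tildeOi i) /\
  (forall i o, i \in Iact om -> o \in Oc -> 0 <= beta i o <= om i o) /\
  (forall i o, i \in Iact om -> o \in Obar -> 0 <= gam i o) /\
  (forall i, i \in Iact om -> \sum_(o in Obar) gam i o = 1) /\
  (forall i o, i \in Iact om -> o \in Obar -> 0 < gam i o -> o \in Aset i).

Definition is_sol (xI : I -> R) (xO : O -> R) : Prop :=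
  (forall i, i \in Iact om -> 0 <= xI i) /\
  (forall o, o \in Obar -> 0 <= xO o) /\
  (forall o, o \in Obar -> xO o = \sum_(i in Iact om) gam i o * xI i) /\
  (forall i, i \in Iact om -> xI i = \sum_(o in Obar) lam i o * xO o) /\
  (forall i o, i \in Iact om -> o \in Oc -> lam i o * xO o <= beta i o) /\
  (forall i o, i \in Iact om -> o \in tildeO -> lam i o * xO o <= p i o).

Definition is_max_sol (xI : I -> R) (xO : O -> R) : Prop :=
  is_sol xI xO /\
  forall yI yO, is_sol yI yO ->
    (forall i, i \in Iact om -> yI i <= xI i) /\
    (forall o, o \in Obar -> yO o <= xO o).

Definition fttc_step (p' om' : I -> O -> R) (Oc' : {set O}) : Prop :=
  exists (xI : I -> R) (xO : O -> R),
    is_max_sol xI xO /\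
    (forall i o, om' i o =
       if i \in Iact om then (if o \in Oc then om i o - lam i o * xO o else 0)
       else om i o) /\
    (forall i o, p' i o =
       if i \in Iact om then
         p i o - (if o \in tildeOi i then lam i o * xO o else 0)
               + (if o \in Obar then gam i o * xI i else 0)
       else p i o) /\
    Oc' = [set o in Oc | 0 < \sum_(j : I) om' j o].

Definition step_EEET : Prop :=
  forall i j, i \in Iact om -> j \in Iact om ->
    (forall o, om i o = om j o) -> forall o, o \in Oc -> lam i o = lam j o.

End Labeling.

(* A complete run of an FTTC mechanism on the problem (pref, om), ending after n
   steps: states (omS d, pS d, OS d) for d = 0..n, and the choices
   (lamS d, betaS d, gamS d) made at step d = 1..n, each satisfying
   stepwise EEET. *)
Definition FTTC_EEET_run (om : I -> O -> R) (n : nat)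
    (omS pS : nat -> I -> O -> R) (OS : nat -> {set O})
    (lamS betaS gamS : nat -> I -> O -> R) : Prop :=
  (forall i o, omS 0%N i o = om i o) /\
  (forall i o, pS 0%N i o = 0) /\
  OS 0%N = [set: O] /\
  (forall d, (d < n)%N ->
     OS d != set0 /\
     valid_choices (pS d) (OS d) (omS d) (lamS d.+1) (betaS d.+1) (gamS d.+1) /\
     step_EEET (pS d) (OS d) (omS d) (lamS d.+1) /\
     fttc_step (pS d) (OS d) (omS d) (lamS d.+1) (betaS d.+1) (gamS d.+1)
               (pS d.+1) (omS d.+1) (OS d.+1)) /\
  OS n = set0.

End FTTC.

(* Main.v *)
Require Import Defs.
From HB Require Import structures.
From mathcomp Require Import all_boot all_order all_algebra.
From mathcomp Require Import lra.
Set Implicit Arguments. Unset Strict Implicit. Unset Printing Implicit Defensive.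
Import Order.TTheory GRing.Theory Num.Theory.
Local Open Scope ring_scope.

Section LabLemmas.
Variables (R : realFieldType) (I O : finType) (pref : I -> rel O).
Variables (p : I -> O -> R) (Oc : {set O}).

Local Notation Lk := (Lk pref p Oc).
Local Notation Tk := (Tk pref p Oc).
Local Notation Lcum := (Lcum pref p Oc).
Local Notation Tcum := (Tcum pref p Oc).
Local Notation tat := (tildeO_at pref p).

Lemma Tk0 : Tk 0 = Oc. Proof. by []. Qed.
Lemma Tcum0 : Tcum 0 = Oc. Proof. by []. Qed.
Lemma Lcum0 : Lcum 0 = set0. Proof. by []. Qed.

Lemma LkS k : Lk k.+1 = [set i | (i \notin Lcum k) && (tat (Tk k) (Tcum k) i != set0)].
Proof. by rewrite /Defs.Lk /Defs.Lcum /Defs.Tk /Defs.Tcum /=; case: (lab _ _ _ k) => [[[a b] c] e]. Qed.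
Lemma TkS k : Tk k.+1 = \bigcup_(i in Lk k.+1) tat (Tk k) (Tcum k) i.
Proof. by rewrite LkS /Defs.Lk /Defs.Lcum /Defs.Tk /Defs.Tcum /=; case: (lab _ _ _ k) => [[[a b] c] e]. Qed.
Lemma LcumS k : Lcum k.+1 = Lcum k :|: Lk k.+1.
Proof. by rewrite LkS /Defs.Lk /Defs.Lcum /Defs.Tk /Defs.Tcum /=; case: (lab _ _ _ k) => [[[a b] c] e]. Qed.
Lemma TcumS k : Tcum k.+1 = Tcum k :|: Tk k.+1.
Proof. by rewrite TkS LkS /Defs.Lk /Defs.Lcum /Defs.Tk /Defs.Tcum /=; case: (lab _ _ _ k) => [[[a b] c] e]. Qed.

Lemma Tcum_mono k l : (k <= l)%N -> Tcum k \subset Tcum l.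
Proof.
move=> /subnK <-; elim: (l - k)%N => [|m IH] //=; rewrite addSn TcumS.
exact: subset_trans IH (subsetUl _ _).
Qed.

Lemma Oc_sub_Tcum k : Oc \subset Tcum k.
Proof. by rewrite -Tcum0; apply: Tcum_mono. Qed.

Lemma Tk_sub_Tcum k : Tk k \subset Tcum k.
Proof. by case: k => [|k]; rewrite ?TcumS ?subsetUr. Qed.

Lemma tat_notin T C i o : o \in tat T C i -> o \notin C.
Proof. by rewrite inE => /andP[/andP[]]. Qed.

Lemma TkS_notin k o : o \in Tk k.+1 -> o \notin Tcum k.
Proof. by rewrite TkS => /bigcupP[i _ /tat_notin]. Qed.

Lemma tat_empty C i : tat set0 C i = set0.
Proof.
apply/setP => o; rewrite !inE; apply/negbTE; apply/negP => /andP[_ /existsP[x]].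
by rewrite inE.
Qed.

Lemma Tk_empty_next k : Tk k.+1 = set0 -> Tk k.+2 = set0.
Proof.
move=> H; rewrite TkS H; apply/setP=> o; rewrite inE; apply/negbTE/negP.
by move=> /bigcupP[i _]; rewrite tat_empty inE.
Qed.

Lemma Lk_empty_T k : Lk k.+1 = set0 -> Tk k.+1 = set0.
Proof. by move=> H; rewrite TkS H big_set0. Qed.

Lemma Tk_empty_L k : Tk k = set0 -> Lk k.+1 = set0.
Proof.
move=> H; rewrite LkS H; apply/setP => i; rewrite !inE tat_empty eqxx.
by rewrite andbF.
Qed.

Lemma Lcum_card k : Lk k.+1 = set0 \/ (k.+1 <= #|Lcum k.+1|)%N.
Proof.
elim: k => [|k IH].
  case: (set_0Vmem (Lk 1)) => [->|[i Hi]]; [by left|right].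
  by rewrite LcumS Lcum0 set0U card_gt0; apply/set0Pn; exists i.
case: (set_0Vmem (Lk k.+2)) => [->|[i Hi]]; [by left|right].
case: IH => [H|H].
  by move: Hi; rewrite (Tk_empty_L (Lk_empty_T H)) inE.
rewrite LcumS cardsU.
have -> : Lcum k.+1 :&: Lk k.+2 = set0.
  apply/setP => x; rewrite !inE LkS inE; by case: (x \in Lcum k.+1).
rewrite cards0 subn0 -addn1; apply: leq_add => //; rewrite addn1 card_gt0; apply/set0Pn; by exists i.
Qed.

Lemma Lk_big : Lk (#|I|.+1) = set0.
Proof.
case: (Lcum_card #|I|) => // H; exfalso.
by have := leq_trans H (max_card _); rewrite ltnn.
Qed.

Lemma Tk_big l : (#|I| < l)%N -> Tk l = set0.
Proof.
move=> /subnK <-; elim: (l - #|I|.+1)%N => [|m IH].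
  by rewrite add0n; apply: Lk_empty_T; apply Lk_big.
by rewrite addSn addnS Tk_empty_next // -addnS.
Qed.


Local Notation Obar := (Obar pref p Oc).
Local Notation tildeO := (tildeO pref p Oc).

Lemma Tk_sub_Obar l : Tk l \subset Obar.
Proof.
case: l => [|k]; first by rewrite Tk0 subsetUl.
case: (ltnP k (K I)) => Hk.
  apply: subset_trans (subsetUr _ _); apply/subsetP => o Ho.
  by apply/bigcupP; exists (Ordinal Hk).
rewrite Tk_big ?sub0set //; apply: leq_trans Hk; rewrite /K; apply: leq_trans (leqnSn _) (leqnSn _).
Qed.

Lemma Tcum_sub_Obar l : Tcum l \subset Obar.
Proof.
elim: l => [|l IH]; first by rewrite Tcum0 subsetUl.
by rewrite TcumS subUset IH Tk_sub_Obar.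
Qed.

Lemma Obar_Tk o : o \in Obar -> exists l, o \in Tk l.
Proof.
rewrite inE => /orP[Ho|]; first by exists 0%N.
by move=> /bigcupP[k _ Ho]; exists k.+1.
Qed.

Lemma tildeO_notOc o : o \in tildeO -> o \notin Oc.
Proof.
move=> /bigcupP[k _ /TkS_notin Ho]; apply/negP => Hc.
by move/negP: Ho; apply; apply: (subsetP (Oc_sub_Tcum k)).
Qed.

Lemma tildeO_Obar : tildeO \subset Obar.
Proof. exact: subsetUr. Qed.

Lemma tat_sub_Tk i l : i \in Lk l.+1 -> tat (Tk l) (Tcum l) i \subset Tk l.+1.
Proof. by move=> Hi; rewrite TkS; apply/subsetP => o Ho; apply/bigcupP; exists i. Qed.

Lemma tildeOi_sub i : tildeOi pref p Oc i \subset tildeO.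
Proof.
apply/subsetP => o /bigcupP[k Hk Ho]; apply/bigcupP; exists k => //.
exact: (subsetP (tat_sub_Tk Hk)).
Qed.

Lemma tildeOi_Obar i : tildeOi pref p Oc i \subset Obar.
Proof. exact: subset_trans (tildeOi_sub i) tildeO_Obar. Qed.

Lemma tildeOi_notOc i o : o \in tildeOi pref p Oc i -> o \notin Oc.
Proof. by move=> H; apply: tildeO_notOc; apply: (subsetP (tildeOi_sub i)). Qed.

Lemma Lcum_ex i l : i \in Lcum l -> exists2 l', (l' < l)%N & i \in Lk l'.+1.
Proof.
elim: l => [|l IH]; first by rewrite Lcum0 inE.
rewrite LcumS inE => /orP[/IH[l' H1 H2]|H]; first by exists l' => //; apply: ltnW.
by exists l.
Qed.

Lemma in_tat T C i o :
  o \in tat T C i = [&& o \notin C, 0 < p i o & [exists u in T, indiff pref i u o]].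
Proof. by rewrite inE andbA. Qed.

Lemma label_closure l m u z :
  u \in Tk l -> 0 < p m z -> indiff pref m u z -> z \notin Tcum l ->
  m \notin Lcum l -> z \in Tk l.+1.
Proof.
move=> Hu Hp Hind Hz Hm.
have Hzt : z \in tat (Tk l) (Tcum l) m.
  by rewrite in_tat Hz Hp /=; apply/existsP; exists u; rewrite Hu.
have HL : m \in Lk l.+1 by rewrite LkS inE Hm /=; apply/set0Pn; exists z.
exact: (subsetP (tat_sub_Tk HL)).
Qed.

Lemma Aset_Bset i : Aset pref p Oc i \subset Bset pref p Oc i.
Proof. by apply/subsetP => o; rewrite inE => /andP[]. Qed.

Lemma Bset_top i o o' : o \in Bset pref p Oc i -> o' \in Obar -> pref i o o'.
Proof. by rewrite inE => /andP[_ /forallP H] Ho'; move: (H o'); rewrite Ho'. Qed.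

Lemma Bset_Obar i o : o \in Bset pref p Oc i -> o \in Obar.
Proof. by rewrite inE => /andP[]. Qed.

End LabLemmas.

Section Run.
Variables (R : realFieldType) (I O : finType) (pref : I -> rel O)
    (om : I -> O -> R) (n : nat)
    (omS pS : nat -> I -> O -> R) (OS : nat -> {set O})
    (lamS betaS gamS : nat -> I -> O -> R).
Hypothesis HFEE : is_FEE pref om.
Hypothesis Hrun : FTTC_EEET_run pref om n omS pS OS lamS betaS gamS.

Local Notation Ob d := (Obar pref (pS d) (OS d)).
Local Notation Act d := (Iact pref (pS d) (OS d) (omS d)).
Local Notation tOi d := (tildeOi pref (pS d) (OS d)).
Local Notation tO d := (tildeO pref (pS d) (OS d)).

Lemma p0 i o : pS 0 i o = 0.
Proof. by case: Hrun => _ [H _]. Qed.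

Lemma om0 i o : omS 0 i o = om i o.
Proof. by case: Hrun => H _. Qed.

Lemma stepH d : (d < n)%N ->
  valid_choices pref (pS d) (OS d) (omS d) (lamS d.+1) (betaS d.+1) (gamS d.+1) /\
  step_EEET pref (pS d) (OS d) (omS d) (lamS d.+1) /\
  fttc_step pref (pS d) (OS d) (omS d) (lamS d.+1) (betaS d.+1) (gamS d.+1)
               (pS d.+1) (omS d.+1) (OS d.+1).
Proof. by case: Hrun => _ [_ [_ [H _]]] Hd; case: (H d Hd) => _ []. Qed.

Lemma OS_mono d : (d < n)%N -> OS d.+1 \subset OS d.
Proof.
move=> Hd; case: (stepH Hd) => _ [_ [xI [xO [_ [_ [_ ->]]]]]].
by apply/subsetP => o; rewrite inE => /andP[].
Qed.

Lemma omNN d : (d <= n)%N -> forall i o, 0 <= omS d i o.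
Proof.
elim: d => [|d IH] Hd i o; first by rewrite om0; case: HFEE => _ [_ [H _]]; case/andP: (H i o).
have Hd' : (d < n)%N by [].
case: (stepH Hd') => [[_ [_ [_ [_ [Hb _]]]]] [_ [xI [xO [[[_ [_ [_ [_ [Hlb _]]]]] _] [Hom _]]]]]].
rewrite Hom; case: ifP => Ha; last exact: IH (ltnW Hd) i o.
case: ifP => Ho //.
rewrite subr_ge0; apply: le_trans (Hlb i o Ha Ho) _.
by case/andP: (Hb i o Ha Ho).
Qed.


Lemma pNN d : (d <= n)%N -> forall i o, 0 <= pS d i o.
Proof.
elim: d => [|d IH] Hd i o; first by rewrite p0.
have Hd' : (d < n)%N by [].
case: (stepH Hd') => [[_ [_ [_ [_ [_ [Hg _]]]]]] [_ [xI [xO [[[HxI [HxO [_ [_ [_ Hlp]]]]] _] [_ [Hp _]]]]]]].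
rewrite Hp; case: ifP => Ha; last exact: IH (ltnW Hd) i o.
apply: addr_ge0.
  case: ifP => Ho; last by rewrite subr0; exact: IH (ltnW Hd) i o.
  by rewrite subr_ge0; apply: Hlp => //; exact: (subsetP (tildeOi_sub pref (pS d) (OS d) i) o Ho).
case: ifP => Ho //; apply: mulr_ge0; [exact: Hg | exact: HxI].
Qed.

Lemma p_outside d i o : (d < n)%N -> o \notin Ob d -> pS d.+1 i o = pS d i o.
Proof.
move=> Hd Ho.
case: (stepH Hd) => [_ [_ [xI [xO [_ [_ [Hp _]]]]]]].
rewrite Hp; case: ifP => // _.
have -> : (o \in tOi d i) = false.
  by apply/negbTE/negP => /(subsetP (tildeOi_Obar _ _ _ _)); apply/negP.
by rewrite (negbTE Ho) subr0 addr0.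
Qed.

Lemma history d m z : (d <= n)%N -> 0 < pS d m z ->
  exists2 t, (t < d)%N & z \in Bset pref (pS t) (OS t) m.
Proof.
elim: d => [|d IH] Hd; first by rewrite p0 ltxx.
have Hd' : (d < n)%N by [].
move=> Hpos.
have Hback : 0 < pS d m z -> exists2 t, (t < d.+1)%N & z \in Bset pref (pS t) (OS t) m.
  by move=> H; case: (IH (ltnW Hd) H) => t Ht Hb; exists t => //; apply: ltnW.
case Hz : (z \in Ob d); last by apply: Hback; rewrite -(p_outside m Hd') ?Hz.
case: (stepH Hd') => [[Hl0 [_ [_ [_ [_ [Hg [_ HgA]]]]]]] [_ [xI [xO [[[HxI [HxO [_ [_ [Hlb Hlp]]]]] _] [_ [Hp _]]]]]]].
move: Hpos; rewrite Hp; case: ifP => Ha; last exact: Hback.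
rewrite Hz.
case Hgp : (0 < gamS d.+1 m z).
  move=> _; exists d => //; apply: (subsetP (Aset_Bset _ _ _ _)); exact: HgA.
have -> : gamS d.+1 m z = 0.
  by apply/eqP; rewrite eq_le (Hg m z Ha Hz) andbT leNgt Hgp.
rewrite mul0r addr0 => H; apply: Hback; apply: lt_le_trans H _.
case: ifP => Ht; rewrite ?subr0 //.
rewrite gerBl; apply: mulr_ge0; [exact: Hl0 | exact: HxO].
Qed.


Lemma pref_trans m a b c : pref m a b -> pref m b c -> pref m a c.
Proof. by case: HFEE => _ [H _]; apply: H. Qed.

Lemma Ob_chain_aux k t : (forall e, (e < t + k)%N -> Ob e.+1 \subset Ob e) -> Ob (t + k) \subset Ob t.
Proof.
elim: k => [|k IH] H; first by rewrite addn0.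
rewrite addnS; apply: subset_trans (H _ _) (IH _); first by rewrite addnS.
by move=> e He; apply: H; rewrite addnS; apply: ltnW.
Qed.

Lemma Ob_chain d t : (forall e, (e < d)%N -> Ob e.+1 \subset Ob e) -> (t <= d)%N -> Ob d \subset Ob t.
Proof.
move=> H Ht; move: H; rewrite -(subnKC Ht) => H; exact: Ob_chain_aux.
Qed.

Lemma Ob_mono_step d : (d < n)%N -> (forall e, (e < d)%N -> Ob e.+1 \subset Ob e) ->
  Ob d.+1 \subset Ob d.
Proof.
move=> Hd IHe.
have key : forall k, Tk pref (pS d.+1) (OS d.+1) k \subset Ob d.
  elim => [|k IHk].
    apply: subset_trans (OS_mono Hd) _; exact: (Tk_sub_Obar pref (pS d) (OS d) 0).
  apply/subsetP => z; rewrite TkS => /bigcupP[m Hm].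
  rewrite in_tat => /and3P[Hzn Hp1 /existsP[u /andP[Hu Hind]]].
  have HuOb := subsetP IHk u Hu.
  apply/negPn/negP => HzOb.
  have Hp0 : 0 < pS d m z by rewrite -(p_outside m Hd HzOb).
  case: (Obar_Tk HuOb) => l Hul.
  have HzT : z \notin Tcum pref (pS d) (OS d) l.
    by apply/negP => /(subsetP (Tcum_sub_Obar _ _ _ l)); apply/negP.
  case Hml : (m \in Lcum pref (pS d) (OS d) l); last first.
    apply: (negP HzOb); apply: (subsetP (Tk_sub_Obar _ _ _ l.+1)).
    by apply: label_closure Hul Hp0 Hind HzT _; rewrite Hml.
  case: (Lcum_ex Hml) => l' Hl' Hml'.
  move: (Hml'); rewrite LkS inE => /andP[_ /set0Pn[w Hw]].
  move: Hw; rewrite in_tat => /and3P[Hwn Hpw /existsP[c /andP[Hc Hindc]]].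
  have HcOb : c \in Ob d := subsetP (Tk_sub_Obar _ _ _ l') c Hc.
  have Hnot : ~~ indiff pref m c z.
    apply/negP => Hcz; apply: (negP HzOb).
    case Hzc : (z \in Tcum pref (pS d) (OS d) l').
      exact: (subsetP (Tcum_sub_Obar _ _ _ l')).
    apply: (subsetP (Tk_sub_Obar _ _ _ l'.+1)); apply: (subsetP (tat_sub_Tk Hml')).
    by rewrite in_tat Hzc Hp0 /=; apply/existsP; exists c; rewrite Hc Hcz.
  case: (history (ltnW Hd) Hp0) => tz Htz Hbz.
  case: (history (ltnW Hd) Hpw) => tw Htw Hbw.
  have Hzc : pref m z c := Bset_top Hbz (subsetP (Ob_chain IHe (ltnW Htz)) c HcOb).
  have Hwu : pref m w u := Bset_top Hbw (subsetP (Ob_chain IHe (ltnW Htw)) u HuOb).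
  move: Hnot; rewrite /indiff Hzc andbT => /negP; apply.
  move/andP: Hindc => [Hcw _]; move/andP: Hind => [Huz _].
  exact: pref_trans Hcw (pref_trans Hwu Huz).
by apply/subsetP => o /Obar_Tk [l Hl]; exact: (subsetP (key l) o Hl).
Qed.

Lemma Ob_mono d : (d < n)%N -> Ob d.+1 \subset Ob d.
Proof.
elim/ltn_ind: d => d IH Hd; apply: Ob_mono_step => // e He.
by apply: IH => //; apply: ltn_trans Hd.
Qed.

Lemma Ob_anti t d : (t <= d)%N -> (d <= n)%N -> Ob d \subset Ob t.
Proof.
move=> Ht Hd; apply: Ob_chain Ht => e He; apply: Ob_mono; exact: leq_trans He Hd.
Qed.


Lemma inact_zero d k : (d <= n)%N -> k \notin Act d -> forall o, omS d k o = 0.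
Proof.
move=> Hd Hk o.
have Hs : \sum_(o : O) omS d k o = 0.
  apply/eqP; rewrite eq_le sumr_ge0 ?andbT; last by move=> *; apply: omNN.
  move: Hk; rewrite !inE negb_or => /andP[_]; by rewrite -leNgt.
by apply: (psumr_eq0P _ Hs) => // *; apply: omNN.
Qed.

Lemma lam_zero d k : (d < n)%N -> k \in Act d -> (forall o, omS d k o = 0) ->
  forall o, o \in OS d -> lamS d.+1 k o = 0.
Proof.
move=> Hd Ha H0 o Ho.
case: (stepH Hd) => [[Hl0 [_ [Hlom _]]] _].
have HoOb : o \in Ob d by rewrite inE Ho.
apply/eqP; rewrite eq_le (Hl0 k o Ha HoOb) andbT leNgt; apply/negP => H.
by have := Hlom k o Ha Ho H; rewrite H0 ltxx.
Qed.

Lemma omEq i j : (forall o, om i o = om j o) ->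
  forall d, (d <= n)%N -> forall o, omS d i o = omS d j o.
Proof.
move=> H0; elim => [|d IH] Hd o; first by rewrite !om0.
have Hd' : (d < n)%N by [].
have IH' := IH (ltnW Hd).
case: (stepH Hd') => [_ [HE [xI [xO [_ [Hom _]]]]]].
rewrite !Hom.
case Hi : (i \in Act d); case Hj : (j \in Act d).
- by case: ifP => // Ho; rewrite IH' (HE i j Hi Hj IH' o Ho).
- have Zj := inact_zero (ltnW Hd) (negbT Hj).
  have Zi : forall o, omS d i o = 0 by move=> o'; rewrite IH' Zj.
  by case: ifP => // Ho; rewrite (lam_zero Hd' Hi Zi Ho) Zi Zj mul0r subr0.
- have Zi := inact_zero (ltnW Hd) (negbT Hi).
  have Zj : forall o, omS d j o = 0 by move=> o'; rewrite -IH' Zi.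
  by case: ifP => // Ho; rewrite (lam_zero Hd' Hj Zj Ho) Zi Zj mul0r subr0.
- exact: IH'.
Qed.

Lemma Mstep d : (d < n)%N -> exists xO : O -> R, forall k, k \in Act d ->
  \sum_o pS d.+1 k o = \sum_o pS d k o + \sum_o (if o \in OS d then lamS d.+1 k o * xO o else 0).
Proof.
move=> Hd.
case: (stepH Hd) => [[Hl0 [_ [_ [Hlt [_ [_ [Hg1 _]]]]]]] [_ [xI [xO [[[HxI [HxO [_ [HxIe _]]]] _] [_ [Hp _]]]]]]].
exists xO => k Ha.
under eq_bigr do rewrite Hp Ha.
rewrite big_split sumrB /=.
have Hb : \sum_o (if o \in Ob d then gamS d.+1 k o * xI k else 0) = xI k.
  by rewrite -big_mkcond /= -mulr_suml Hg1 // mul1r.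
rewrite Hb HxIe //.
have Hpt : forall o, (if o \in Ob d then lamS d.+1 k o * xO o else 0) =
   (if o \in OS d then lamS d.+1 k o * xO o else 0) +
   (if o \in tOi d k then lamS d.+1 k o * xO o else 0).
  move=> o; case Hc : (o \in OS d).
    have -> : o \in Ob d by rewrite inE Hc.
    have -> : (o \in tOi d k) = false by apply/negbTE/negP => /tildeOi_notOc; rewrite Hc.
    by rewrite addr0.
  case Ht : (o \in tOi d k).
    by rewrite (subsetP (tildeOi_Obar _ _ _ _) o Ht) add0r.
  rewrite add0r; case: ifP => // HOb.
  have HtO : o \in tO d by move: HOb; rewrite inE Hc.
  have -> : lamS d.+1 k o = 0.
    apply/eqP; rewrite eq_le (Hl0 k o Ha HOb) andbT leNgt; apply/negP => H.
    by have := Hlt k o Ha HtO H; rewrite Ht.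
  by rewrite mul0r.
rewrite [X in _ + X = _]big_mkcond /= (eq_bigr _ (fun o _ => Hpt o)) big_split /=.
by rewrite addrCA subrK addrC.
Qed.


Lemma p_inact d k o : (d < n)%N -> k \notin Act d -> pS d.+1 k o = pS d k o.
Proof.
move=> Hd Hk; case: (stepH Hd) => [_ [_ [xI [xO [_ [_ [Hp _]]]]]]].
by rewrite Hp (negbTE Hk).
Qed.

Lemma MEq i j : (forall o, om i o = om j o) ->
  forall d, (d <= n)%N -> \sum_o pS d i o = \sum_o pS d j o.
Proof.
move=> H0; elim => [|d IH] Hd.
  by rewrite !big1 // => o _; rewrite p0.
have Hd' : (d < n)%N by [].
have IH' := IH (ltnW Hd).
have Heq := omEq H0 (ltnW Hd).
case: (Mstep Hd') => xO HM.
case: (stepH Hd') => [_ [HE _]].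
case Hi : (i \in Act d); case Hj : (j \in Act d).
- rewrite (HM i Hi) (HM j Hj) IH'; congr (_ + _); apply: eq_bigr => o _.
  by case: ifP => // Ho; rewrite (HE i j Hi Hj Heq o Ho).
- have Zj := inact_zero (ltnW Hd) (negbT Hj).
  have Zi : forall o, omS d i o = 0 by move=> o'; rewrite Heq Zj.
  rewrite (HM i Hi) [X in _ + X = _]big1 ?addr0; last by move=> o _; case: ifP => // Ho; rewrite (lam_zero Hd' Hi Zi Ho) mul0r.
  by rewrite IH'; apply: eq_bigr => o _; rewrite p_inact ?Hj.
- have Zi := inact_zero (ltnW Hd) (negbT Hi).
  have Zj : forall o, omS d j o = 0 by move=> o'; rewrite -Heq Zi.
  rewrite (HM j Hj) [X in _ = _ + X]big1 ?addr0; last by move=> o _; case: ifP => // Ho; rewrite (lam_zero Hd' Hj Zj Ho) mul0r.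
  by rewrite -IH'; apply: eq_bigr => o _; rewrite p_inact ?Hi.
- transitivity (\sum_o pS d i o); first by apply: eq_bigr => o _; rewrite p_inact ?Hi.
  by rewrite IH'; apply: eq_bigr => o _; rewrite p_inact ?Hj.
Qed.

Lemma sum_sub_le (F : O -> R) (P : pred O) : (forall o, 0 <= F o) ->
  \sum_(o | P o) F o <= \sum_o F o.
Proof.
move=> H; rewrite [X in _ <= X](bigID P) /= lerDl; exact: sumr_ge0.
Qed.

Lemma Sdelta d j o0 : (d < n)%N -> (exists2 u, u \in Ob d & pref j u o0) ->
  \sum_o pS d.+1 j o - \sum_o pS d j o <=
  \sum_(o | pref j o o0) pS d.+1 j o - \sum_(o | pref j o o0) pS d j o.
Proof.
move=> Hd [u HuOb Hu].
case Ha : (j \in Act d); last first.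
  by rewrite !(eq_bigr _ (fun o _ => p_inact o Hd (negbT Ha))) !subrr.
case: (stepH Hd) => [[Hl0 [_ [_ [_ [_ [Hg [_ HgA]]]]]]] [_ [xI [xO [[[HxI [HxO _]] _] [_ [Hp _]]]]]]].
set a := fun o => if o \in tOi d j then lamS d.+1 j o * xO o else 0.
set b := fun o => if o \in Ob d then gamS d.+1 j o * xI j else 0.
have Hpe : forall o, pS d.+1 j o = pS d j o - a o + b o by move=> o; rewrite Hp Ha.
have Ha0 : forall o, 0 <= a o.
  move=> o; rewrite /a; case: ifP => // Ht.
  have HOb := subsetP (tildeOi_Obar _ _ _ _) o Ht.
  apply: mulr_ge0; [exact: Hl0 | exact: HxO].
have Hb : \sum_(o | pref j o o0) b o = \sum_o b o.
  rewrite big_mkcond /=; apply: eq_bigr => o _; case: ifP => // Hn.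
  rewrite /b; case: ifP => // HOb.
  case Hgp : (0 < gamS d.+1 j o).
    have HB := subsetP (Aset_Bset _ _ _ _) o (HgA j o Ha HOb Hgp).
    by have := pref_trans (Bset_top HB HuOb) Hu; rewrite Hn.
  have -> : gamS d.+1 j o = 0.
    by apply/eqP; rewrite eq_le (Hg j o Ha HOb) andbT leNgt Hgp.
  by rewrite mul0r.
have E1 : \sum_o pS d.+1 j o = \sum_o pS d j o - \sum_o a o + \sum_o b o.
  by rewrite -sumrB -big_split; apply: eq_bigr => o _; rewrite Hpe.
have E2 : \sum_(o | pref j o o0) pS d.+1 j o =
  \sum_(o | pref j o o0) pS d j o - \sum_(o | pref j o o0) a o + \sum_(o | pref j o o0) b o.
  by rewrite -sumrB -big_split; apply: eq_bigr => o _; rewrite Hpe.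
rewrite E1 E2 Hb.
set A := \sum_o pS d j o; set B := \sum_(o | pref j o o0) pS d j o.
set C := \sum_o b o.
have := sum_sub_le (pref j ^~ o0) Ha0; lra.
Qed.


Lemma SeqM j o0 e : (e <= n)%N -> (forall t, (t < e)%N -> exists2 u, u \in Ob t & pref j u o0) ->
  \sum_(o | pref j o o0) pS e j o = \sum_o pS e j o.
Proof.
elim: e => [|e IH] He Hex.
  by rewrite !big1 // => o _; rewrite p0.
have He' : (e < n)%N by [].
have IH' := IH (ltnW He) (fun t Ht => Hex t (ltnW Ht)).
have Hd := Sdelta He' (Hex e (ltnSn e)).
apply/eqP; rewrite eq_le; apply/andP; split.
  by apply: sum_sub_le => o; apply: pNN.
move: Hd; rewrite IH'; lra.
Qed.

Lemma final i j o0 : (forall o, om i o = om j o) -> forall d, (d <= n)%N ->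
  \sum_(o | pref j o o0) pS d i o <= \sum_(o | pref j o o0) pS d j o.
Proof.
move=> H0; elim => [|d IH] Hd.
  by rewrite !big1 // => o _; rewrite p0.
have Hd' : (d < n)%N by [].
case Hex : [exists u in Ob d, pref j u o0]; last first.
  have Hout : forall k o, pref j o o0 -> pS d.+1 k o = pS d k o.
    move=> k o Ho; apply: p_outside => //; apply/negP => HoOb.
    by move/negbT/negP: Hex; apply; apply/existsP; exists o; rewrite HoOb.
  rewrite (eq_bigr _ (fun o Ho => Hout i o Ho)) (eq_bigr _ (fun o Ho => Hout j o Ho)).
  exact: IH (ltnW Hd).
move/existsP: Hex => [u /andP[HuOb Hu]].
rewrite SeqM //; last first.
  move=> t Ht; exists u => //; apply: (subsetP (Ob_anti _ _) u HuOb) => //.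
  exact: ltnW.
rewrite -(MEq H0 Hd); apply: sum_sub_le => o; exact: pNN.
Qed.

End Run.

Unset Implicit Arguments.

Theorem proposition2 (R : realFieldType) (I O : finType) (pref : I -> rel O)
    (om : I -> O -> R) (n : nat)
    (omS pS : nat -> I -> O -> R) (OS : nat -> {set O})
    (lamS betaS gamS : nat -> I -> O -> R) :
  is_FEE pref om ->
  FTTC_EEET_run pref om n omS pS OS lamS betaS gamS ->
  EENE pref om (pS n).
Proof.
move=> HF Hr i j H0; split => o0.
  apply: (final HF Hr) => // o; by rewrite H0.
exact: (final HF Hr).
Qed.
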